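(* Let $M$ be a finite-horizon MDP with an offline dataset $\mathcal D$ and dataset-induced MDP $M_{\mathcal D}$, and let $\pi$ be batch-constrained with respect to $\mathcal D$. If $\max_{(s,a):\rho_\pi^{M_{\mathcal D}}(s,a)>0}\|P^{M_{\mathcal D}}(\cdot\mid s,a)-P^M(\cdot\mid s,a)\|_1\le\epsilon_P$ and $\max_{(s,a,r):\rho_\pi^{M_{\mathcal D}}(s,a)>0}|R^{M_{\mathcal D}}(r\mid s,a)-R^M(r\mid s,a)|\le\epsilon_R$, then $$\|\rho_\pi^M(s)-\rho_\pi^{M_{\mathcal D}}(s)\|_1+\|\rho_\pi^M(s,a,r)-\rho_\pi^{M_{\mathcal D}}(s,a,r)\|_1\le|\mathcal S|(|\mathcal A||\mathcal R|+1)\frac{H-1}{2}\epsilon_P+|\mathcal S||\mathcal A||\mathcal R|\epsilon_R.$$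
   Context: $M=(\mathcal S,\mathcal A,\mathcal R,H,P^M,R^M)$ is a finite-horizon MDP with finite spaces, fixed initial state $s_0$, state space partitioned into disjoint timestep layers $\mathcal S_h$. Visitation distributions: $\rho_\pi(s_0)=1/H$, $\rho_\pi(s)=\sum_{\tilde s\in\mathcal S_{h-1},\tilde a}\rho_\pi(\tilde s)\pi(\tilde a\mid\tilde s)P(s\mid\tilde s,\tilde a)$ for $s\in\mathcal S_h$, $h>0$; $\rho_\pi(s,a)=\rho_\pi(s)\pi(a\mid s)$; $\rho_\pi(s,a,r)=\rho_\pi(s,a)R(r\mid s,a)$. $M_{\mathcal D}$ has empirical transitions $N(s,a,s')/N(s,a)$ and rewards $N(s,a,r)/N(s,a)$ when $N(s,a)>0$ and $0$ otherwise ($N$ counts occurrences in $\mathcal D$). $\pi$ is batch-constrained if $\pi(a\mid s)=0$ whenever $(s,a)$ does not appear in $\mathcal D$. *)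

(* Defs.v *)
From mathcomp Require Import all_boot all_order all_algebra.
Set Implicit Arguments. Unset Strict Implicit. Unset Printing Implicit Defensive.
Import Order.TTheory GRing.Theory Num.Theory.
Local Open Scope ring_scope.

Section MDP.
Variables (R : realFieldType) (S A Rew : finType).

Definition dataset := seq (S * A * Rew * S).

Definition N_sa (D : dataset) (s : S) (a : A) : nat :=
  count (fun x => (x.1.1.1 == s) && (x.1.1.2 == a)) D.
Definition N_sas (D : dataset) (s : S) (a : A) (s' : S) : nat :=
  count (fun x => [&& x.1.1.1 == s, x.1.1.2 == a & x.2 == s']) D.
Definition N_sar (D : dataset) (s : S) (a : A) (r : Rew) : nat :=
  count (fun x => [&& x.1.1.1 == s, x.1.1.2 == a & x.1.2 == r]) D.

Definition P_D (D : dataset) (s : S) (a : A) (s' : S) : R :=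
  if N_sa D s a == 0%N then 0 else (N_sas D s a s')%:R / (N_sa D s a)%:R.
Definition R_D (D : dataset) (s : S) (a : A) (r : Rew) : R :=
  if N_sa D s a == 0%N then 0 else (N_sar D s a r)%:R / (N_sa D s a)%:R.

Definition batch_constrained (D : dataset) (pi : S -> A -> R) : Prop :=
  forall s a, N_sa D s a = 0%N -> pi s a = 0.

(* Layered visitation distribution; layer : S -> nat gives the timestep. *)
Variables (layer : S -> nat) (s0 : S) (H : nat).

Fixpoint rho_layer (pi : S -> A -> R) (P : S -> A -> S -> R) (h : nat) : S -> R :=
  match h with
  | 0 => fun s => if s == s0 then 1 / H%:R else 0
  | h'.+1 => fun s =>
      \sum_(t : S | layer t == h') \sum_(b : A)
        rho_layer pi P h' t * pi t b * P t b s
  end.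

Definition rho_s (pi : S -> A -> R) (P : S -> A -> S -> R) (s : S) : R :=
  rho_layer pi P (layer s) s.
Definition rho_sa pi P (s : S) (a : A) : R := rho_s pi P s * pi s a.
Definition rho_sar pi P (Rk : S -> A -> Rew -> R) (s : S) (a : A) (r : Rew) : R :=
  rho_sa pi P s a * Rk s a r.

End MDP.
Arguments P_D R {S A Rew} D s a s'.
Arguments R_D R {S A Rew} D s a r.

(* Main.v *)
Require Import Defs.
From mathcomp Require Import all_boot all_order all_algebra.
From mathcomp Require Import ring lra.
Import Order.TTheory GRing.Theory Num.Theory.
Local Open Scope ring_scope.

Lemma sum_Nsas (S A Rew : finType) (D : dataset S A Rew) s a :
  (\sum_(s' : S) N_sas D s a s' = N_sa D s a)%N.
Proof.
elim: D => [|x D IH]; first by rewrite big1.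
rewrite /N_sa /N_sas /= in IH *.
rewrite big_split /= IH; congr (_ + _)%N.
case E1: (x.1.1.1 == s); case E2: (x.1.1.2 == a) => /=; try by rewrite big1.
rewrite (bigD1 x.2) //= eqxx big1 ?addn0 // => i /negbTE.
by rewrite eq_sym => ->.
Qed.

Lemma sum_PD (R : realFieldType) (S A Rew : finType) (D : dataset S A Rew) s a :
  N_sa D s a != 0%N -> \sum_(s' : S) P_D R D s a s' = 1.
Proof.
move=> hN; rewrite /P_D (negbTE hN) -mulr_suml -natr_sum sum_Nsas divff //.
by rewrite pnatr_eq0.
Qed.

Lemma PD_ge0 (R : realFieldType) (S A Rew : finType) (D : dataset S A Rew) s a s' :
  0 <= P_D R D s a s'.
Proof. by rewrite /P_D; case: ifP => // _; apply: divr_ge0; apply: ler0n. Qed.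

Lemma le_sum1 (R : realFieldType) (T : finType) (F : T -> R) x :
  (forall y, 0 <= F y) -> F x <= \sum_y F y.
Proof.
move=> h; rewrite (bigD1 x) //= lerDl; exact: sumr_ge0.
Qed.

Lemma le_sumP (R : realFieldType) (T : finType) (F : T -> R) (p : pred T) :
  (forall y, 0 <= F y) -> \sum_(y | p y) F y <= \sum_y F y.
Proof.
move=> h; rewrite [X in _ <= X](bigID p) /= lerDl; exact: sumr_ge0.
Qed.

Theorem lemma6 (R : realFieldType) (S A Rew : finType)
  (layer : S -> nat) (s0 : S) (H : nat)
  (P : S -> A -> S -> R) (Rk : S -> A -> Rew -> R)
  (D : dataset S A Rew) (pi : S -> A -> R) (epsP epsR : R) :
  (0 < H)%N ->
  (forall s, layer s = 0%N <-> s = s0) ->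
  (forall s, (layer s < H)%N) ->
  (forall s a s', 0 <= P s a s') ->
  (forall s a, \sum_(s' : S) P s a s' = 1) ->
  (forall s a r, 0 <= Rk s a r) ->
  (forall s a, \sum_(r : Rew) Rk s a r = 1) ->
  (forall s a, 0 <= pi s a) ->
  (forall s, \sum_(a : A) pi s a = 1) ->
  batch_constrained D pi ->
  (forall s a, 0 < rho_sa layer s0 H pi (P_D R D) s a ->
     \sum_(s' : S) `|P_D R D s a s' - P s a s'| <= epsP) ->
  (forall s a r, 0 < rho_sa layer s0 H pi (P_D R D) s a ->
     `|R_D R D s a r - Rk s a r| <= epsR) ->
  \sum_(s : S) `|rho_s layer s0 H pi P s - rho_s layer s0 H pi (P_D R D) s|
  + \sum_(s : S) \sum_(a : A) \sum_(r : Rew)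
      `|rho_sar layer s0 H pi P Rk s a r - rho_sar layer s0 H pi (P_D R D) (R_D R D) s a r|
  <= #|S|%:R * (#|A|%:R * #|Rew|%:R + 1) * ((H%:R - 1) / 2) * epsP
     + #|S|%:R * #|A|%:R * #|Rew|%:R * epsR.
Proof.
move=> H0 hl0 hlH P0 P1 Rk0 Rk1 pi0 pi1 bc hP hR.
set rM := rho_layer layer s0 H pi P.
set rD := rho_layer layer s0 H pi (P_D R D).
have Hpos : 0 < H%:R :> R by rewrite ltr0n.
have piPD : forall t b, pi t b * \sum_s P_D R D t b s = pi t b.
  move=> t b; case: (N_sa D t b =P 0%N) => [/bc ->|/eqP hN]; first by rewrite mul0r.
  by rewrite sum_PD // mulr1.
have [a0 Ha0] : exists a, 0 < pi s0 a.
  case: (pickP (fun a => 0 < pi s0 a)) => [a ha|hn]; first by exists a.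
  have : \sum_a pi s0 a = 0.
    apply: big1 => a _; have := pi0 s0 a; rewrite le_eqVlt hn orbF.
    by move/eqP.
  by rewrite pi1 => /eqP; rewrite oner_eq0.
have ls0 : layer s0 = 0%N by apply/hl0.
have rsa0 : 0 < rho_sa layer s0 H pi (P_D R D) s0 a0.
  by rewrite /rho_sa /rho_s ls0 /= eqxx mul1r mulr_gt0 // invr_gt0.
have epsP0 : 0 <= epsP.
  apply: le_trans (hP _ _ rsa0); exact: sumr_ge0.
have inv : forall h, [/\ (forall s, 0 <= rD h s),
    \sum_(s | layer s == h) rD h s <= 1 / H%:R &
    \sum_(s | layer s == h) `|rM h s - rD h s| <= h%:R * epsP / H%:R].
  elim=> [|h [nn mass dif]].
    have nn0 : forall s, 0 <= rD 0%N s.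
      by move=> s; rewrite /rD /=; case: ifP => // _; rewrite mul1r invr_ge0 ler0n.
    split => //.
    - apply: le_trans (le_sumP _ _ _ _ nn0) _.
      rewrite (bigD1 s0) ?ls0 //= big1 ?addr0.
        by rewrite /rD /= eqxx.
      move=> s hs; rewrite /rD /=; by rewrite (negbTE hs).
    - by rewrite big1 ?mul0r ?mul0r // => s _; rewrite /rM /rD /= subrr normr0.
  have nn1 : forall s, 0 <= rD h.+1 s.
    move=> s; rewrite /rD /=; apply: sumr_ge0 => t _; apply: sumr_ge0 => b _.
    by rewrite mulr_ge0 ?mulr_ge0 ?PD_ge0 ?pi0 ?nn.
  have key : \sum_s rD h.+1 s = \sum_(t | layer t == h) rD h t.
    rewrite /rD /= exchange_big /=; apply: eq_bigr => t _; rewrite exchange_big /=.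
    under eq_bigr => b _ do rewrite -mulr_sumr -mulrA piPD.
    by rewrite -mulr_sumr pi1 mulr1.
  split => //.
    by apply: le_trans (le_sumP _ _ _ _ nn1) _; rewrite key.
  apply: le_trans (le_sumP _ _ _ _ (fun _ => normr_ge0 _)) _.
  apply: (@le_trans _ _ (\sum_s \sum_(t | layer t == h) \sum_b
     (`|rM h t - rD h t| * pi t b * P t b s
      + rD h t * pi t b * `|P_D R D t b s - P t b s|)) _ _).
    apply: ler_sum => s _; rewrite /rM /rD /= -sumrB.
    apply: le_trans (ler_norm_sum _ _ _) _; apply: ler_sum => t _.
    rewrite -sumrB; apply: le_trans (ler_norm_sum _ _ _) _; apply: ler_sum => b _.
    set X := rho_layer _ _ _ _ P _ _; set Y := rho_layer _ _ _ _ (P_D R D) _ _.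
    have -> : X * pi t b * P t b s - Y * pi t b * P_D R D t b s
        = (X - Y) * pi t b * P t b s + Y * pi t b * (P t b s - P_D R D t b s) by ring.
    apply: le_trans (ler_normD _ _) _.
    rewrite !normrM !(ger0_norm (pi0 _ _)) !(ger0_norm (P0 _ _ _)) (ger0_norm (nn _)) (distrC (P t b s)).
    exact: le_refl.
  rewrite exchange_big /=.
  apply: (@le_trans _ _ (\sum_(t | layer t == h) (`|rM h t - rD h t| + rD h t * epsP)) _ _).
    apply: ler_sum => t ht; rewrite exchange_big /=.
    under eq_bigr => b _ do rewrite big_split /= -!mulr_sumr P1 mulr1.
    rewrite big_split /= -mulr_sumr pi1 mulr1 lerD2l.
    apply: (@le_trans _ _ (\sum_b rD h t * pi t b * epsP) _ _).
      apply: ler_sum => b _.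
      have := mulr_ge0 (nn t) (pi0 t b); rewrite le_eqVlt => /orP[/eqP <-|hpos].
        by rewrite !mul0r.
      apply: ler_wpM2l; first exact: ltW.
      by apply: hP; rewrite /rho_sa /rho_s (eqP ht); exact: hpos.
    by rewrite -mulr_suml -mulr_sumr pi1 mulr1.
  rewrite big_split /= -mulr_suml.
  apply: le_trans (lerD dif (ler_wpM2r epsP0 mass)) _.
  have -> : h.+1%:R * epsP / H%:R = h%:R * epsP / H%:R + 1 / H%:R * epsP.
    by rewrite -natr1; ring.
  by [].
have le1 : forall s, rD (layer s) s <= 1 / H%:R.
  move=> s; have [nn mass _] := inv (layer s).
  apply: le_trans mass; rewrite (bigD1 s) //= lerDl; apply: sumr_ge0 => t _; exact: nn.
have ge0 : forall s, 0 <= rD (layer s) s by move=> s; have [nn _ _] := inv (layer s).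
have H1 : 1 <= H%:R :> R by rewrite ler1n.
have iH1 : 1 / H%:R <= 1 :> R by rewrite mul1r invf_le1.
have pile1 : forall s a, pi s a <= 1.
  by move=> s a; rewrite -(pi1 s); apply: le_sum1 => y; exact: pi0.
have Rkle1 : forall s a r, Rk s a r <= 1.
  by move=> s a r; rewrite -(Rk1 s a); apply: le_sum1 => y; exact: Rk0.
have dS : forall s, `|rM (layer s) s - rD (layer s) s| <= (H%:R - 1) / 2 * epsP.
  move=> s; have [_ _ dif] := inv (layer s).
  have e1 : `|rM (layer s) s - rD (layer s) s| <= (layer s)%:R * epsP / H%:R.
    apply: le_trans dif; rewrite (bigD1 s) //= lerDl; apply: sumr_ge0 => t _; exact: normr_ge0.
  apply: le_trans e1 _.
  have hl : (layer s)%:R <= H%:R - 1 :> R.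
    have : ((layer s).+1%:R <= H%:R :> R) by rewrite ler_nat; exact: hlH.
    rewrite -natr1 => h1; lra.
  apply: (@le_trans _ _ ((H%:R - 1) * epsP / H%:R) _ _).
    by rewrite ler_wpM2r ?invr_ge0 ?ler0n // ler_wpM2r.
  have [HE|H2] : H = 1%N \/ (2 <= H)%N by case: (H) H0 => [|[|n]] //; [left|right].
    by rewrite HE subrr !mul0r.
  rewrite [X in _ <= X]mulrAC; apply: ler_wpM2l.
    apply: mulr_ge0 => //; lra.
  rewrite lef_pV2 ?posrE ?ltr0n //; first by rewrite ler_nat.
have dSAR : forall s a r,
   `|rho_sar layer s0 H pi P Rk s a r - rho_sar layer s0 H pi (P_D R D) (R_D R D) s a r|
     <= (H%:R - 1) / 2 * epsP + epsR.
  move=> s a r; rewrite /rho_sar /rho_sa /rho_s.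
  set X := rho_layer _ _ _ _ P _ _; set Y := rho_layer _ _ _ _ (P_D R D) _ _.
  have -> : X * pi s a * Rk s a r - Y * pi s a * R_D R D s a r
      = (X - Y) * (pi s a * Rk s a r) + (Y * pi s a) * (Rk s a r - R_D R D s a r) by ring.
  apply: le_trans (ler_normD _ _) _; apply: lerD.
    rewrite normrM (ger0_norm (mulr_ge0 (pi0 _ _) (Rk0 _ _ _))).
    apply: le_trans (dS s); apply: ler_piMr; first exact: normr_ge0.
    exact: mulr_ile1 (pi0 _ _) (Rk0 _ _ _) (pile1 _ _) (Rkle1 _ _ _).
  have Y0 : 0 <= Y * pi s a by apply: mulr_ge0; [exact: ge0|exact: pi0].
  rewrite normrM (ger0_norm Y0) distrC.
  have epsR0 : 0 <= epsR by apply: le_trans (hR s0 a0 r rsa0); exact: normr_ge0.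
  move: Y0; rewrite le_eqVlt => /orP[/eqP <-|hpos]; first by rewrite mul0r.
  apply: le_trans (ler_wpM2l (ltW hpos) (hR s a r hpos)) _.
  apply: ler_piMl => //; apply: mulr_ile1; [exact: ge0|exact: pi0| |exact: pile1].
  exact: le_trans (le1 s) iH1.
pose c := (H%:R - 1) / 2 * epsP.
have s1 : \sum_(s : S) `|rho_s layer s0 H pi P s - rho_s layer s0 H pi (P_D R D) s|
    <= \sum_(s : S) c.
  apply: ler_sum => s _; exact: (dS s).
have s2 : \sum_(s : S) \sum_(a : A) \sum_(r : Rew)
      `|rho_sar layer s0 H pi P Rk s a r - rho_sar layer s0 H pi (P_D R D) (R_D R D) s a r|
    <= \sum_(s : S) \sum_(a : A) \sum_(r : Rew) (c + epsR).
  apply: ler_sum => s _; apply: ler_sum => a _; apply: ler_sum => r _; exact: (dSAR s a r).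
apply: le_trans (lerD s1 s2) _.
rewrite !sumr_const.
rewrite le_eqVlt; apply/orP; left; apply/eqP; rewrite /c; ring.
Qed.
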